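(* Let $q$ be a prime power, $\ell,L$ integers with $1\le\ell\le q$ and $\ell\le L<\ell q$, and $r\in[0,1-\frac{\ell}{L+1})$ with $rn\in\mathbb{N}$. If $C\subseteq\mathbb{F}_q^n$ is a linear $(r,\ell,L)$ list-recoverable code of dimension at least $2$, then its minimum distance satisfies $d(C)>rn+\lfloor\frac{\ell}{L+1-\ell}rn\rfloor$.
   Context: A linear code is a subspace of $\mathbb{F}_q^n$; $d(C)$ is the minimum Hamming distance between distinct codewords. A code $C\subseteq\mathbb{F}_q^n$ is $(r,\ell,L)$ list-recoverable if for every sequence $S_1,\dots,S_n$ of subsets of $\mathbb{F}_q$ of size at most $\ell$, the number of $c\in C$ with $c_i\notin S_i$ for at most $rn$ coordinates $i$ is at most $L$. *)

(* Defs.v *)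
From HB Require Import structures.
From mathcomp Require Import all_boot all_order all_algebra.
Set Implicit Arguments. Unset Strict Implicit. Unset Printing Implicit Defensive.
Import Order.TTheory GRing.Theory Num.Theory.
Local Open Scope ring_scope.

Definition hamming (F : finFieldType) (n : nat) (c c' : 'rV[F]_n) : nat :=
  #|[set i : 'I_n | c ord0 i != c' ord0 i]|.

Definition list_recoverable (R : realFieldType) (F : finFieldType) (n : nat)
    (C : {pred 'rV[F]_n}) (r : R) (l L : nat) : Prop :=
  forall S : 'I_n -> {set F}, (forall i, (#|S i| <= l)%N) ->
    (#|[set c : 'rV[F]_n | (c \in C) &&
        ((#|[set i : 'I_n | c ord0 i \notin S i]|)%:R <= r * n%:R)%R]| <= L)%N.

(* Main.v *)
Require Import Defs.
From HB Require Import structures.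
From mathcomp Require Import all_boot all_order all_algebra.
From mathcomp Require Import zify.
Import Order.TTheory GRing.Theory Num.Theory.
Local Open Scope ring_scope.

Lemma slot_card (d e N l a : nat) : (e * N <= d * l)%N ->
  (#|[set t : 'I_(e * N) | (t %% d == a)%N]| <= l)%N.
Proof.
move=> H.
case: l H => [|l] H.
  rewrite muln0 in H.
  have -> : [set t : 'I_(e * N) | (t %% d == a)%N] = set0.
    apply/setP => -[t lt] /=; exfalso; move: lt H; lia.
  by rewrite cards0.
pose f (t : 'I_(e * N)) : 'I_l.+1 := inord (t %/ d).
rewrite -(@card_in_imset _ _ f).
  by apply: leq_trans (max_card _) _; rewrite card_ord.
move=> t1 t2; rewrite !inE => /eqP h1 /eqP h2 hf.
have dpos : (0 < d)%N.
  rewrite lt0n; apply/negP => /eqP d0; move: (ltn_ord t1) H; rewrite d0; lia.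
have lt1 : (t1 %/ d < l.+1)%N.
  by rewrite ltn_divLR // (mulnC l.+1); apply: leq_trans H; apply: ltn_ord.
have lt2 : (t2 %/ d < l.+1)%N.
  by rewrite ltn_divLR // (mulnC l.+1); apply: leq_trans H; apply: ltn_ord.
move: hf; rewrite /f => /(congr1 val); rewrite /= !inordK // => hq.
apply: val_inj => /=.
by rewrite (divn_eq t1 d) (divn_eq t2 d) hq h1 h2.
Qed.

Lemma cov_inj (d e j u u' : nat) : (e <= d)%N -> (u < e)%N -> (u' < e)%N ->
  ((j * e + u) %% d = (j * e + u') %% d)%N -> u = u'.
Proof.
move=> ed ue ue' /eqP; rewrite eqn_modDl !modn_small; first by move/eqP.
all: lia.
Qed.

Theorem theorem6p3 (R : realFieldType) (F : finFieldType) (n l L k : nat)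
    (r : R) (C : {vspace 'rV[F]_n}) :
  (1 <= l)%N -> (l <= #|F|)%N -> (l <= L)%N -> (L < l * #|F|)%N ->
  0 <= r -> r < 1 - l%:R / (L.+1)%:R ->
  r * n%:R = k%:R ->
  list_recoverable (mem C) r l L ->
  (2 <= \dim C)%N ->
  forall c c' : 'rV[F]_n, c \in C -> c' \in C -> c != c' ->
    (k + (l * k) %/ (L.+1 - l) < hamming c c')%N.
Proof.
move=> l1 lF lL LlF r0 _ hr LR dimC c c' cC c'C cc'.
rewrite ltnNge; apply/negP => hd.
set D := [set i : 'I_n | c ord0 i != c' ord0 i].
have hD : hamming c c' = #|D| by [].
rewrite hD in hd.
set d := #|D| in hd.
set e := (d - k)%N.
have eN : (e * L.+1 <= d * l)%N.
  have: (e <= (l * k) %/ (L.+1 - l))%N by rewrite /e; move: hd; rewrite -/d; move: ((l * k) %/ _)%N => q; lia.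
  rewrite leq_divRL; last by lia.
  move=> h.
  case: (leqP d k) => dk.
    by rewrite /e (eqP (_ : d - k == 0)%N) ?mul0n //; rewrite subn_eq0.
  have -> : d = (k + e)%N by rewrite /e; lia.
  have -> : (e * L.+1 = e * (L.+1 - l) + e * l)%N by rewrite -mulnDr subnK // ltnW.
  rewrite mulnDl (mulnC k l); move: h; move: (e * (L.+1 - l))%N (l * k)%N (e * l)%N; lia.
have ed : (e <= d)%N by rewrite /e leq_subr.
have dk : (d - e <= k)%N by rewrite /e; lia.
set w := c - c'.
have wnz : w != 0 by rewrite subr_eq0.
have [v vC vnw] : exists2 v, v \in C & v \notin <[w]>%VS.
  case: (boolP [exists v, (v \in C) && (v \notin <[w]>%VS)]).
    by case/existsP => v /andP[] *; exists v.
  move/existsPn => H; exfalso.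
  have : (C <= <[w]>)%VS.
    apply/subvP => v vC; move: (H v); rewrite vC /=; by rewrite negbK.
  move/dimvS; rewrite dim_vline wnz; lia.
set M := [set x in take l (enum F)].
have cardM : #|M| = l.
  rewrite cardsE (card_uniqP _) ?take_uniq ?enum_uniq // size_take -cardE.
  by case: ltnP => // h; apply/eqP; rewrite eqn_leq h /=; exact: lF.
set P := enum (setX [set: F] M).
have Puniq : uniq P by apply: enum_uniq.
have Psize : (L.+1 <= size P)%N by rewrite /P -cardE cardsX cardsT cardM mulnC.
pose p (j : 'I_L.+1) := nth (0, 0) P j.
pose x (j : 'I_L.+1) := (p j).1 *: w + (p j).2 *: v.
have pM j : (p j).2 \in M.
  have : p j \in setX [set: F] M by rewrite -mem_enum; apply: mem_nth; apply: leq_trans Psize.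
  by rewrite inE => /andP[].
have xinj : injective x.
  move=> j1 j2; rewrite /x.
  have pe : p j1 = p j2 -> j1 = j2.
    move/eqP; rewrite /p nth_uniq //; first by move/eqP; apply: val_inj.
      by apply: leq_trans Psize.
    by apply: leq_trans Psize.
  move=> hx; apply: pe; move: (p j1) (p j2) hx => [a1 b1] [a2 b2] /= hx.
  have h : (b2 - b1) *: v = (a1 - a2) *: w.
    rewrite !scalerBl; apply/eqP; rewrite subr_eq addrAC hx addrC addKr //.
  case: (eqVneq b2 b1) => hb.
    move: h; rewrite hb subrr scale0r => /esym/eqP; rewrite scaler_eq0 (negbTE wnz) orbF subr_eq0 => /eqP ->.
    by [].
  exfalso; move/negP: vnw; apply.
  have -> : v = ((b2 - b1)^-1 * (a1 - a2)) *: w.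
    by rewrite -scalerA -h scalerA mulVf ?subr_eq0 // scale1r.
  by rewrite memvZ // memv_line.
have xC j : x j \in C by rewrite memvD // memvZ // memvB.
have xE j i : x j ord0 i = (p j).1 * (c ord0 i - c' ord0 i) + (p j).2 * v ord0 i.
  by rewrite !mxE.
have [D0|[i0 i0D]] := set_0Vmem D.
  exfalso; move/eqP: cc'; apply; apply/rowP => i.
  have : i \notin D by rewrite D0 inE.
  by rewrite inE negbK => /eqP.
set s := enum D.
have suniq : uniq s by apply: enum_uniq.
have ssize : size s = d by rewrite /d cardE.
pose cov (j : 'I_L.+1) := [set nth i0 s ((j * e + u) %% d) | u : 'I_e].
pose T a := [set t : 'I_(e * L.+1) | (t %% d == a)%N].
pose S i := if i \in D then [set x (inord (t %/ e)) ord0 i | t : 'I_(e * L.+1) in T (index i s)]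
            else [set μ * v ord0 i | μ in M].
have hS i : (#|S i| <= l)%N.
  rewrite /S; case: ifP => _.
    by apply: leq_trans (leq_imset_card _ _) _; apply: slot_card.
  by apply: leq_trans (leq_imset_card _ _) _; rewrite cardM.
have := LR S hS.
apply/negP; rewrite -ltnNge.
have <- : #|[set x j | j in 'I_L.+1]| = L.+1 by rewrite card_imset // card_ord.
apply: subset_leq_card; apply/subsetP => _ /imsetP[j _ ->]; rewrite inE xC /=.
rewrite hr ler_nat.
have covD : cov j \subset D.
  apply/subsetP => _ /imsetP[u _ ->]; rewrite -[_ \in D]mem_enum; apply: mem_nth.
  rewrite ssize ltn_pmod //; move: (ltn_ord u) ed; lia.
have covc : #|cov j| = e.
  rewrite card_imset ?card_ord // => u1 u2 /eqP.
  have dpos : (0 < d)%N by move: (ltn_ord u1) ed; lia.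
  rewrite nth_uniq ?ssize ?ltn_pmod //.
  by move/eqP/cov_inj => h; apply: val_inj; apply: h => //.
apply: leq_trans (_ : #|D :\: cov j| <= k)%N; last first.
  by rewrite cardsD (setIidPr covD) covc.
apply: subset_leq_card; apply/subsetP => i; rewrite inE => hi.
have iD : i \in D.
  apply: contraR hi => iD; rewrite /S /=; case: ifP => [h|_]; first by move: iD; rewrite h.
  apply/imsetP; exists (p j).2 => //.
  by rewrite xE; move: iD; rewrite inE negbK => /eqP ->; rewrite subrr mulr0 add0r.
rewrite in_setD; apply/andP; split; last exact: iD.
apply: contra hi => /imsetP[u _ ->].
have e0 : (0 < e)%N by case: (e) u => [[]|].
have lt : (j * e + u < e * L.+1)%N.
  have : (j * e + e <= e * L.+1)%N by rewrite -mulSnr mulnC leq_mul2l ltn_ord orbT.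
  by apply: leq_trans; rewrite ltn_add2l.
rewrite /S /=; case: ifP => [_|]; last by move/negP; case; rewrite (subsetP covD) //; apply/imsetP; exists u.
apply/imsetP; exists (Ordinal lt).
  have dpos : (0 < d)%N := leq_trans e0 ed.
  by rewrite inE /= index_uniq // ssize ltn_pmod.
congr (x _ ord0 _); apply: val_inj; rewrite /= divnMDl // divn_small // addn0 inordK //.
Qed.
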